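(* Let $(X,d)$ be a metric space, $E\subseteq X$, $x\in E$. The values of $$\underline{\delta}_E(x)=\liminf_{\lambda\to0}\liminf_{r\to0}\frac{\log n(\lambda r,E\cap\overline{B}(x,r))}{\log 1/\lambda},\qquad \overline{\delta}_E(x)=\limsup_{\lambda\to0}\limsup_{r\to0}\frac{\log n(\lambda r,E\cap\overline{B}(x,r))}{\log 1/\lambda}$$ do not change if $n$ is replaced by $\nu$ or by $\overline{n}$, or if $E\cap\overline{B}(x,r)$ is replaced by $E\cap B(x,r)$. Moreover, if $E$ is closed in $X$, they do not change if $E\cap\overline{B}(x,r)$ is replaced by $\overline{E\cap B(x,r)}$.
   Context: $B(x,r)$ is the open ball, $\overline{B}(x,r)=\{y:d(x,y)\le r\}$ the closed ball, and $\overline{A}$ denotes closure. For $A\subseteq X$: $n(r,A)$ (resp. $\overline{n}(r,A)$) is the minimum number of open (resp. closed) balls of radius $r$ necessary to cover $A$, and $\nu(r,A)$ is the maximum number of pairwise disjoint open balls of $A$ (as a metric space) of radius $r$ contained in $A$. The numbers $\underline{\delta}_E(x)$, $\overline{\delta}_E(x)$ are the lower and upper tangential dimensions of $E$ at $x$. *)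

(* Defs.v *)
From HB Require Import structures.
From mathcomp Require Import all_boot all_order all_algebra.
From mathcomp Require Import all_classical all_reals all_analysis.
Set Implicit Arguments. Unset Strict Implicit. Unset Printing Implicit Defensive.
Import Order.TTheory GRing.Theory Num.Theory.
Local Open Scope classical_set_scope.
Local Open Scope ring_scope.

Definition is_metric {R : realType} {T : Type} (d : T -> T -> R) : Prop :=
  [/\ forall x y, 0 <= d x y,
      forall x y, d x y = 0 <-> x = y,
      forall x y, d x y = d y x &
      forall x y z, d x z <= d x y + d y z].

Definition oball {R : realType} {T : Type} (d : T -> T -> R) (x : T) (r : R) : set T :=
  [set y | d x y < r].
Definition cball {R : realType} {T : Type} (d : T -> T -> R) (x : T) (r : R) : set T :=
  [set y | d x y <= r].

Definition mclosure {R : realType} {T : Type} (d : T -> T -> R) (A : set T) : set T :=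
  [set y | forall e : R, 0 < e -> exists2 a, A a & d y a < e].
Definition mclosed {R : realType} {T : Type} (d : T -> T -> R) (A : set T) : Prop :=
  mclosure d A `<=` A.

(* n(r,A): minimal number of open balls (of X) of radius r covering A;
   +oo if no finite cover exists *)
Definition ncov {R : realType} {T : Type} (d : T -> T -> R) (r : R) (A : set T)
  : \bar R :=
  ereal_inf [set (k%:R)%:E | k in [set k : nat | exists c : 'I_k -> T,
     A `<=` [set y | exists i, oball d (c i) r y]]].

Definition ncovc {R : realType} {T : Type} (d : T -> T -> R) (r : R) (A : set T)
  : \bar R :=
  ereal_inf [set (k%:R)%:E | k in [set k : nat | exists c : 'I_k -> T,
     A `<=` [set y | exists i, cball d (c i) r y]]].

(* nu(r,A): maximal number of pairwise disjoint open balls of the metric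
   space A (i.e. A `&` B(a,r) with a in A) of radius r; may be +oo *)
Definition npack {R : realType} {T : Type} (d : T -> T -> R) (r : R) (A : set T)
  : \bar R :=
  ereal_sup [set (k%:R)%:E | k in [set k : nat | exists c : 'I_k -> T,
     (forall i, A (c i)) /\
     (forall i j, i != j ->
        (A `&` oball d (c i) r) `&` (A `&` oball d (c j) r) = set0)]].

Definition elog {R : realType} (x : \bar R) : \bar R :=
  match x with
  | EFin r => if (0 < r)%R then EFin (ln r) else -oo%E
  | +oo%E => +oo%E
  | -oo%E => -oo%E
  end.

Definition eliminf0 {R : realType} (f : R -> \bar R) : \bar R :=
  ereal_sup [set ereal_inf [set f t | t in [set t : R | 0 < t < e]]
            | e in [set e : R | 0 < e]].
Definition elimsup0 {R : realType} (f : R -> \bar R) : \bar R :=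
  ereal_inf [set ereal_sup [set f t | t in [set t : R | 0 < t < e]]
            | e in [set e : R | 0 < e]].

Definition tratio {R : realType} {T : Type} (N : R -> set T -> \bar R)
  (S : R -> set T) (lam r : R) : \bar R :=
  (elog (N (lam * r)%R (S r)) * ((ln (1 / lam))^-1)%R%:E)%E.

Definition lower_tdim {R : realType} {T : Type} (N : R -> set T -> \bar R)
  (S : R -> set T) : \bar R :=
  eliminf0 (fun lam => eliminf0 (fun r => tratio N S lam r)).
Definition upper_tdim {R : realType} {T : Type} (N : R -> set T -> \bar R)
  (S : R -> set T) : \bar R :=
  elimsup0 (fun lam => elimsup0 (fun r => tratio N S lam r)).

(* Main.v *)
Require Import Defs.
From HB Require Import structures.
From mathcomp Require Import all_boot all_order all_algebra.
From mathcomp Require Import all_classical all_reals all_analysis.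
From mathcomp Require Import lra ring.
Import Order.TTheory GRing.Theory Num.Theory.
Local Open Scope classical_set_scope.
Local Open Scope ring_scope.

Lemma kbound {R : realType} (c e lam : R) : 0 < c <= 1 -> 0 < e -> 0 < lam -> lam < 1 ->
  lam < expR (ln c / e) ->
  0 < ln (1 / lam) /\ (ln (1 / lam))^-1 <= (1 + e) * (ln (1 / (c * lam)))^-1.
Proof.
move=> /andP[c0 c1] e0 l0 l1 lc.
have hL : ln (1 / lam) = - ln lam by rewrite div1r lnV // posrE.
have cl0 : 0 < c * lam by rewrite mulr_gt0.
have hC : ln (1 / (c * lam)) = - ln c - ln lam.
  by rewrite div1r lnV ?posrE // lnM ?posrE // opprD.
have lnl : ln lam < 0 by rewrite ln_lt0 // l0 l1.
have lnc : ln c <= 0 by rewrite ln_le0.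
have h1 : ln lam < ln c / e.
  by rewrite -[X in _ < X]expRK ltr_ln ?posrE ?expR_gt0.
have h2 : ln lam * e < ln c by rewrite -ltr_pdivlMr.
rewrite hL hC; split; first by rewrite oppr_gt0.
have M0 : 0 < - ln c - ln lam by lra.
rewrite ler_pdivlMr //.
rewrite mulrC -[_ * _^-1]/((- ln c - ln lam) / (- ln lam)) ler_pdivrMr ?oppr_gt0 //.
nra.
Qed.

Section Lim.
Context {R : realType}.
Local Open Scope ereal_scope.

Lemma eliminf0_le (f g : R -> \bar R) (a δ : R) : (0 < a)%R -> (0 < δ)%R ->
  (forall t, (0 < t < δ)%R -> f t <= g (a * t)%R) -> eliminf0 f <= eliminf0 g.
Proof.
move=> a0 d0 H; apply: ge_ereal_sup => _ [e e0 <-].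
have m0 : (0 < a * Num.min e δ)%R by rewrite mulr_gt0 // lt_min e0 d0.
apply: le_trans (ereal_sup_ubound _); last by exists (a * Num.min e δ)%R.
apply: le_ereal_inf_tmp => _ [s /andP[s0 sm] <-].
apply: ge_ereal_inf; exists (f (s / a)%R).
  exists (s / a)%R => //; apply/andP; split; first by rewrite divr_gt0.
  by rewrite ltr_pdivrMr // mulrC; apply: (lt_le_trans sm); rewrite ler_pM2l // ge_min lexx.
have := H (s / a)%R; rewrite mulrCA divff ?gt_eqF // mulr1; apply.
apply/andP; split; first by rewrite divr_gt0.
by rewrite ltr_pdivrMr // mulrC; apply: (lt_le_trans sm); rewrite ler_pM2l // ge_min lexx orbT.
Qed.

Lemma elimsup0_le (f g : R -> \bar R) (a δ : R) : (0 < a)%R -> (0 < δ)%R ->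
  (forall t, (0 < t < δ)%R -> f t <= g (a * t)%R) -> elimsup0 f <= elimsup0 g.
Proof.
move=> a0 d0 H; apply: le_ereal_inf_tmp => _ [e e0 <-].
have m0 : (0 < Num.min δ (e / a))%R by rewrite lt_min d0 divr_gt0.
apply: ge_ereal_inf; exists (ereal_sup [set f t | t in [set t : R | (0 < t < Num.min δ (e / a))%R]]).
  by exists (Num.min δ (e / a))%R.
apply: ge_ereal_sup => _ [t /andP[t0 tm] <-].
apply: le_ereal_sup_tmp; exists (g (a * t)%R).
  exists (a * t)%R => //; apply/andP; split; first by rewrite mulr_gt0.
  by rewrite mulrC -ltr_pdivlMr //; move: tm; rewrite lt_min => /andP[].
by apply: H; rewrite t0 /=; move: tm; rewrite lt_min => /andP[].
Qed.

Lemma eliminf0Z (f : R -> \bar R) (b : R) : (0 < b)%R ->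
  eliminf0 (fun t => b%:E * f t) = b%:E * eliminf0 f.
Proof.
move=> b0; rewrite /eliminf0 -ereal_sup_pZl //; congr ereal_sup.
rewrite image_comp; apply: eq_imagel => e _ /=.
by rewrite -ereal_inf_pZl // image_comp.
Qed.

Lemma elimsup0Z (f : R -> \bar R) (b : R) : (0 < b)%R ->
  elimsup0 (fun t => b%:E * f t) = b%:E * elimsup0 f.
Proof.
move=> b0; rewrite /elimsup0 -ereal_inf_pZl //; congr ereal_inf.
rewrite image_comp; apply: eq_imagel => e _ /=.
by rewrite -ereal_sup_pZl // image_comp.
Qed.

Lemma le_eps (X Y : \bar R) : (forall e : R, (0 < e)%R -> X <= (1 + e)%:E * Y) -> X <= Y.
Proof.
move=> H; case: Y H => [y| |] H; last 2 first.
- by rewrite leey.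
- by have := H 1%R ltr01; rewrite gt0_muleNy // lte_fin addr_gt0.
case: X H => [x| |] H; last 2 first.
- by have := H 1%R ltr01; rewrite -EFinM leNgt ltey.
- by rewrite leNye.
rewrite lee_fin; apply/ler_addgt0Pr => e e0.
have [y0|y0] := leP y 0%R.
  have := H 1%R ltr01; rewrite -EFinM lee_fin => h.
  apply: le_trans h _; nra.
have := H (e / y)%R (divr_gt0 e0 y0); rewrite -EFinM lee_fin mulrDl mul1r.
by rewrite -mulrA mulVf ?gt_eqF // mulr1.
Qed.



Lemma dom {T : Type} (N1 N2 : R -> set T -> \bar R) (S1 S2 : R -> set T) (c a δ : R) :
 (0 < c <= 1)%R -> (0 < a)%R -> (0 < δ)%R ->
 (forall lam r, (0 < lam < δ)%R -> (0 < r < δ)%R ->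
    elog (N1 (lam * r)%R (S1 r)) <= elog (N2 ((c * lam) * (a * r))%R (S2 (a * r)%R))) ->
 (forall lam r, (0 < lam)%R -> (0 < r)%R -> 0 <= elog (N2 (lam * r)%R (S2 r))) ->
 lower_tdim N1 S1 <= lower_tdim N2 S2 /\ upper_tdim N1 S1 <= upper_tdim N2 S2.
Proof.
move=> /andP[c0 c1] a0 d0 H H0.
suff K : forall e : R, (0 < e)%R -> lower_tdim N1 S1 <= (1 + e)%:E * lower_tdim N2 S2 /\
    upper_tdim N1 S1 <= (1 + e)%:E * upper_tdim N2 S2.
  by split; apply: le_eps => e e0; have [] := K e e0.
move=> e e0.
have b0 : (0 < 1 + e)%R by rewrite addr_gt0.
set δ1 := Num.min δ (Num.min 1 (expR (ln c / e)))%R.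
have d10 : (0 < δ1)%R by rewrite !lt_min d0 ltr01 expR_gt0.
have Hk : forall lam, (0 < lam < δ1)%R -> (0 <= (ln (1 / lam))^-1)%R /\
   ((ln (1 / lam))^-1)%:E <= (1 + e)%:E * ((ln (1 / (c * lam)))^-1)%:E.
  move=> lam /andP[l0]; rewrite !lt_min => /and3P[ld l1 lc].
  have := @kbound R c e lam; rewrite c0 c1 => /(_ isT e0 l0 l1 lc) [h1 h2].
  by split; [rewrite invr_ge0 ltW | rewrite -EFinM lee_fin].
have Hin : forall lam, (0 < lam < δ1)%R -> forall r, (0 < r < δ)%R ->
    tratio N1 S1 lam r <= (1 + e)%:E * tratio N2 S2 (c * lam)%R (a * r)%R.
  move=> lam hl r hr; have [k0 kb] := Hk lam hl.
  have hld : (0 < lam < δ)%R.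
    by move: hl => /andP[-> /lt_le_trans]; apply; rewrite ge_min lexx.
  rewrite /tratio; apply: le_trans (lee_wpmul2r _ (H lam r hld hr)) _.
    by rewrite lee_fin.
  rewrite muleCA; apply: lee_wpmul2l.
    apply: H0; first by rewrite mulr_gt0 //; case/andP: hl.
    by rewrite mulr_gt0 //; case/andP: hr.
  exact: kb.
split.
  rewrite /lower_tdim -eliminf0Z //.
  apply: (@eliminf0_le _ _ c δ1) => // lam hl.
  rewrite -eliminf0Z //; apply: (@eliminf0_le _ _ a δ) => // r hr.
  exact: Hin.
rewrite /upper_tdim -elimsup0Z //.
apply: (@elimsup0_le _ _ c δ1) => // lam hl.
rewrite -elimsup0Z //; apply: (@elimsup0_le _ _ a δ) => // r hr.
exact: Hin.
Qed.

End Lim.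

Section Met.
Context {R : realType} {T : Type} (d : T -> T -> R).
Local Open Scope ereal_scope.

Lemma elog_le (u v : \bar R) : u <= v -> elog u <= elog v.
Proof.
case: u => [r| |] uv /=; last by rewrite leNye.
- case: ifPn => r0; last by rewrite leNye.
  case: v uv => [s| |] //= uv; last by rewrite leey.
  have s0 : (0 < s)%R by rewrite (lt_le_trans r0) // -lee_fin.
  by rewrite ifT // lee_fin ler_ln ?posrE // -lee_fin.
- by case: v uv.
Qed.

Lemma elog_ge0 (u : \bar R) : 1 <= u -> 0 <= elog u.
Proof.
case: u => [r| |] r1 /=; last 2 first.
- by rewrite leey.
- by move: r1; rewrite leeNy_eq.
have r0 : (0 < r)%R by rewrite (lt_le_trans ltr01).
by rewrite ifT // lee_fin ln_ge0.
Qed.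

Lemma ncov_ge1 r (A : set T) a : A a -> 1 <= ncov d r A.
Proof.
move=> Aa; apply: le_ereal_inf_tmp => _ [k [c hc] <-].
have [i _] := hc a Aa; rewrite lee_fin ler1n.
by case: k c hc i => [|k] c hc [].
Qed.

Lemma ncovc_ge1 r (A : set T) a : A a -> 1 <= ncovc d r A.
Proof.
move=> Aa; apply: le_ereal_inf_tmp => _ [k [c hc] <-].
have [i _] := hc a Aa; rewrite lee_fin ler1n.
by case: k c hc i => [|k] c hc [].
Qed.

Lemma npack_ge1 r (A : set T) a : A a -> 1 <= npack d r A.
Proof.
move=> Aa; apply: le_ereal_sup_tmp; exists 1%:R%:E => //.
exists 1%N => //; exists (fun _ => a); split => // i j.
by rewrite !ord1 eqxx.
Qed.

Lemma ncov_sub r (A B : set T) : A `<=` B -> ncov d r A <= ncov d r B.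
Proof.
move=> AB; apply: ereal_inf_le_tmp => _ [k [c hc] <-].
by exists k => //; exists c => y /AB /hc.
Qed.

Lemma ncovc_ncov r (A : set T) : ncovc d r A <= ncov d r A.
Proof.
apply: ereal_inf_le_tmp => _ [k [c hc] <-].
exists k => //; exists c => y /hc [i hi]; exists i; exact: ltW.
Qed.

Lemma ncov_ncovc s (A : set T) : (0 < s)%R -> ncov d s A <= ncovc d (s / 2) A.
Proof.
move=> s0; apply: ereal_inf_le_tmp => _ [k [c hc] <-].
exists k => //; exists c => y /hc [i hi]; exists i.
rewrite /oball /=; apply: le_lt_trans hi _; lra.
Qed.

Lemma npack_ncov s (A : set T) : is_metric d -> (0 < s)%R ->
  npack d s A <= ncov d (s / 2) A.
Proof.
move=> [dge0 d0 dsym dtri] s0; apply: ge_ereal_sup => _ [k [c [cA cdisj]] <-].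
apply: le_ereal_inf_tmp => _ [m [z cov] <-].
rewrite lee_fin ler_nat.
have /choice [f hf] : forall i, exists j, oball d (z j) (s / 2) (c i).
  by move=> i; exact: cov _ (cA i).
have finj : injective f.
  move=> i j fij; apply/eqP; apply/negPn/negP => nij.
  have hi := hf i; have hj := hf j; rewrite fij in hi.
  have H := cdisj i j nij.
  suff : (A `&` oball d (c i) s `&` (A `&` oball d (c j) s)) (c i) by rewrite H.
  split; split => //; rewrite /oball /=.
    by rewrite (proj2 (d0 _ _) erefl).
  apply: le_lt_trans (dtri _ (z (f j)) _) _.
  move: hi hj; rewrite /oball /= (dsym (c j)); lra.
by have := leq_card f finj; rewrite !card_ord.
Qed.

Lemma ncov_npack s (A : set T) a : is_metric d -> (0 < s)%R -> A a ->
  ncov d s A <= npack d (s / 2) A.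
Proof.
move=> [dge0 d0 dsym dtri] s0 Aa.
rewrite leNgt; apply/negP => Hlt.
have allP : forall n, exists c : 'I_n -> T, (forall i, A (c i)) /\
   (forall i j, i != j ->
     (A `&` oball d (c i) (s / 2)) `&` (A `&` oball d (c j) (s / 2)) = set0).
  elim=> [|n [c [cA cdisj]]].
    by exists (fun _ => a); split => // -[].
  have nle : (n%:R)%:E <= npack d (s / 2) A.
    by apply: ereal_sup_ubound; exists n => //; exists c.
  have ncv : ~ (A `<=` [set y | exists i, oball d (c i) s y]).
    move=> cv; have h : ncov d s A <= n%:R%:E.
      by apply: ereal_inf_lbound; exists n => //; exists c.
    by have := le_lt_trans nle (lt_le_trans Hlt h); rewrite ltxx.
  have [b [Ab hb]] : exists b, A b /\ forall i, ~ oball d (c i) s b.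
    apply: contra_notP ncv => hn y Ay; apply: contrapT => hy; apply: hn.
    by exists y; split => // i hi; apply: hy; exists i.
  exists (fun j : 'I_n.+1 => if unlift ord_max j is Some i then c i else b).
  split.
    by move=> j; case: unliftP.
  move=> j1 j2 nj; apply/seteqP; split => // y [[Ay h1] [_ h2]].
  move: nj h1 h2; case: unliftP => [i1 ->|->]; case: unliftP => [i2 ->|->] //=.
  - rewrite (inj_eq lift_inj) => ni h1 h2.
    have H := cdisj i1 i2 ni.
    suff : (A `&` oball d (c i1) (s / 2) `&` (A `&` oball d (c i2) (s / 2))) y
      by rewrite H.
    by [].
  - move=> _ h1 h2; apply: (hb i1); rewrite /oball /=.
    apply: le_lt_trans (dtri _ y _) _; move: h1 h2; rewrite /oball /= (dsym y b); lra.
  - move=> _ h1 h2; apply: (hb i2); rewrite /oball /=.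
    apply: le_lt_trans (dtri _ y _) _; move: h1 h2; rewrite /oball /= (dsym y b); lra.
  - by rewrite eqxx.
have hge : forall n, n%:R%:E <= npack d (s / 2) A.
  move=> n; have [c hc] := allP n.
  by apply: ereal_sup_ubound; exists n => //; exists c.
move: Hlt hge; case: (npack d (s / 2) A) => [y| |] Hlt hge.
- by have := hge (Num.truncn y).+1; rewrite lee_fin leNgt Num.Theory.truncnS_gt.
- by have := lt_le_trans Hlt (leey _); rewrite ltxx.
- by have := hge 0%N; rewrite leeNy_eq.
Qed.

End Met.

Section Sets.
Context {R : realType} {T : Type} (d : T -> T -> R).

Lemma sub_oc E x r : E `&` oball d x r `<=` E `&` cball d x r.
Proof. by move=> y [Ey h]; split => //; exact: ltW. Qed.

Lemma sub_co E x r : 0 < r -> E `&` cball d x r `<=` E `&` oball d x (2 * r).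
Proof. move=> r0 y [Ey h]; split => //; rewrite /oball /=; move: h; rewrite /cball /=; lra. Qed.

Lemma sub_ccl (A : set T) : is_metric d -> A `<=` mclosure d A.
Proof.
move=> [_ d0 _ _] y Ay e e0; exists y => //.
by rewrite (proj2 (d0 _ _) erefl).
Qed.

Lemma sub_clc E x r : is_metric d -> mclosed d E ->
  mclosure d (E `&` oball d x r) `<=` E `&` cball d x r.
Proof.
move=> [dge0 d0 dsym dtri] cE y hy; split.
  apply: cE => e e0; have [a [Ea _] h] := hy e e0; by exists a.
rewrite /cball /=; rewrite leNgt; apply/negP => hr.
have [a [Ea ha] h] := hy (d x y - r) (ltac:(by rewrite subr_gt0)).
have := dtri x a y; rewrite (dsym a y); move: ha; rewrite /oball /=; lra.
Qed.

End Sets.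

Lemma both {R : realType} {T : Type} (N1 N2 : R -> set T -> \bar R) (S1 S2 : R -> set T) :
  (lower_tdim N1 S1 <= lower_tdim N2 S2)%E /\ (upper_tdim N1 S1 <= upper_tdim N2 S2)%E ->
  (lower_tdim N2 S2 <= lower_tdim N1 S1)%E /\ (upper_tdim N2 S2 <= upper_tdim N1 S1)%E ->
  lower_tdim N1 S1 = lower_tdim N2 S2 /\ upper_tdim N1 S1 = upper_tdim N2 S2.
Proof.
by move=> [h1 h2] [h3 h4]; split; apply/le_anti/andP; split.
Qed.

Theorem proposition3p2 (R : realType) (T : Type) (d : T -> T -> R)
  (E : set T) (x : T) :
  is_metric d -> E x ->
  (* n replaced by nu *)
  lower_tdim (npack d) (fun r => E `&` cball d x r)
    = lower_tdim (ncov d) (fun r => E `&` cball d x r) /\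
  upper_tdim (npack d) (fun r => E `&` cball d x r)
    = upper_tdim (ncov d) (fun r => E `&` cball d x r) /\
  (* n replaced by \overline{n} *)
  lower_tdim (ncovc d) (fun r => E `&` cball d x r)
    = lower_tdim (ncov d) (fun r => E `&` cball d x r) /\
  upper_tdim (ncovc d) (fun r => E `&` cball d x r)
    = upper_tdim (ncov d) (fun r => E `&` cball d x r) /\
  (* closed ball replaced by open ball *)
  lower_tdim (ncov d) (fun r => E `&` oball d x r)
    = lower_tdim (ncov d) (fun r => E `&` cball d x r) /\
  upper_tdim (ncov d) (fun r => E `&` oball d x r)
    = upper_tdim (ncov d) (fun r => E `&` cball d x r) /\
  (* if E is closed: replaced by the closure of E `&` B(x,r) *)
  (mclosed d E ->
   lower_tdim (ncov d) (fun r => mclosure d (E `&` oball d x r))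
     = lower_tdim (ncov d) (fun r => E `&` cball d x r) /\
   upper_tdim (ncov d) (fun r => mclosure d (E `&` oball d x r))
     = upper_tdim (ncov d) (fun r => E `&` cball d x r)).
Proof.
move=> hd Ex; have [dge0 d0 dsym dtri] := hd.
have dxx : d x x = 0 by exact: (proj2 (d0 x x) erefl).
have c2 : (0 < (2^-1 : R) <= 1) by apply/andP; split; lra.
have c1 : (0 < (1 : R) <= 1) by rewrite ltr01 lexx.
have cbx : forall r : R, 0 < r -> (E `&` cball d x r) x.
  by move=> r r0; split => //; rewrite /cball /= dxx ltW.
have obx : forall r : R, 0 < r -> (E `&` oball d x r) x.
  by move=> r r0; split => //; rewrite /oball /= dxx.
have clx : forall r : R, 0 < r -> mclosure d (E `&` oball d x r) x.
  by move=> r r0; apply: sub_ccl => //; exact: obx.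
have H0c : forall lam r : R, 0 < lam -> 0 < r ->
    (0 <= elog (ncov d (lam * r) (E `&` cball d x r)))%E.
  by move=> lam r l0 r0; apply: elog_ge0; apply: (@ncov_ge1 R T d _ _ x); exact: cbx.
have e2 : forall lam r : R, 2^-1 * lam * (1 * r) = lam * r / 2 by move=> *; ring.
have [pl pu] : lower_tdim (npack d) (fun r => E `&` cball d x r)
    = lower_tdim (ncov d) (fun r => E `&` cball d x r) /\
  upper_tdim (npack d) (fun r => E `&` cball d x r)
    = upper_tdim (ncov d) (fun r => E `&` cball d x r).
  apply: both.
  - apply: (@dom R T _ _ _ _ 2^-1 1 1) => //.
    move=> lam r /andP[l0 _] /andP[r0 _]; apply: elog_le; rewrite e2 mul1r.
    by apply: npack_ncov => //; rewrite mulr_gt0.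
  - apply: (@dom R T _ _ _ _ 2^-1 1 1) => //.
      move=> lam r /andP[l0 _] /andP[r0 _]; apply: elog_le; rewrite e2 mul1r.
      by apply: (@ncov_npack R T d _ _ x) => //; [rewrite mulr_gt0 | exact: cbx].
    by move=> lam r l0 r0; apply: elog_ge0; apply: (@npack_ge1 R T d _ _ x); exact: cbx.
have [ql qu] : lower_tdim (ncovc d) (fun r => E `&` cball d x r)
    = lower_tdim (ncov d) (fun r => E `&` cball d x r) /\
  upper_tdim (ncovc d) (fun r => E `&` cball d x r)
    = upper_tdim (ncov d) (fun r => E `&` cball d x r).
  apply: both.
  - apply: (@dom R T _ _ _ _ 1 1 1) => //.
    move=> lam r /andP[l0 _] /andP[r0 _]; apply: elog_le; rewrite !mul1r.
    exact: ncovc_ncov.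
  - apply: (@dom R T _ _ _ _ 2^-1 1 1) => //.
      move=> lam r /andP[l0 _] /andP[r0 _]; apply: elog_le; rewrite e2 mul1r.
      by apply: ncov_ncovc; rewrite mulr_gt0.
    by move=> lam r l0 r0; apply: elog_ge0; apply: (@ncovc_ge1 R T d _ _ x); exact: cbx.
have e3 : forall lam r : R, 2^-1 * lam * (2 * r) = lam * r by move=> *; field.
have a2 : (0 : R) < 2 by [].
have [ol ou] : lower_tdim (ncov d) (fun r => E `&` oball d x r)
    = lower_tdim (ncov d) (fun r => E `&` cball d x r) /\
  upper_tdim (ncov d) (fun r => E `&` oball d x r)
    = upper_tdim (ncov d) (fun r => E `&` cball d x r).
  apply: both.
  - apply: (@dom R T (ncov d) (ncov d) (fun r => E `&` oball d x r) (fun r => E `&` cball d x r) 1 1 1 c1 ltr01 ltr01); last first.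
      by move=> lam r l0 r0; apply: elog_ge0; apply: (@ncov_ge1 R T d _ _ x); exact: cbx.
    move=> lam r /andP[l0 _] /andP[r0 _]; apply: elog_le; rewrite !mul1r.
    apply: ncov_sub; exact: sub_oc.
  - apply: (@dom R T (ncov d) (ncov d) (fun r => E `&` cball d x r) (fun r => E `&` oball d x r) 2^-1 2 1 c2 a2 ltr01); last first.
      by move=> lam r l0 r0; apply: elog_ge0; apply: (@ncov_ge1 R T d _ _ x); exact: obx.
    move=> lam r /andP[l0 _] /andP[r0 _]; apply: elog_le; rewrite e3.
    apply: ncov_sub; exact: sub_co.
split; first exact: pl. split; first exact: pu. split; first exact: ql.
split; first exact: qu. split; first exact: ol. split; first exact: ou.
move=> cE; apply: both.
- apply: (@dom R T (ncov d) (ncov d) (fun r => mclosure d (E `&` oball d x r)) (fun r => E `&` cball d x r) 1 1 1 c1 ltr01 ltr01); last first.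
    by move=> lam r l0 r0; apply: elog_ge0; apply: (@ncov_ge1 R T d _ _ x); exact: cbx.
  move=> lam r /andP[l0 _] /andP[r0 _]; apply: elog_le; rewrite !mul1r.
  by apply: ncov_sub; exact: sub_clc.
- apply: (@dom R T (ncov d) (ncov d) (fun r => E `&` cball d x r) (fun r => mclosure d (E `&` oball d x r)) 2^-1 2 1 c2 a2 ltr01); last first.
    by move=> lam r l0 r0; apply: elog_ge0; apply: (@ncov_ge1 R T d _ _ x); exact: clx.
  move=> lam r /andP[l0 _] /andP[r0 _]; apply: elog_le; rewrite e3.
  apply: ncov_sub => y /(@sub_co R T d E x r r0) hy; exact: sub_ccl.
Qed.
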